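(* Let $c\in\mathbb{R}$, $\beta\geq0$, $q\in(0,1)$, $Q=q^2$ and $y=e^{-2\beta}$. Then $$Z_{\beta,q,c} = y^{1/2} + \sum_{\substack{L,R\geq0\\ L+R>0}}y^{L+R} \sum_{\substack{\ell_1,\dots,\ell_L\geq 1 \\ m_1,\dots,m_{R}\geq 1}}\prod_{j=1}^{L} \frac{Q^{\frac12 \ell_j(\ell_j-1)+c\ell_j+j\ell_j+\ell_{j-1}(\ell_{j}+\cdots+\ell_{L})}}{1-Q^{\ell_{j}+\cdots + \ell_{L}}}\prod_{j=1}^{R}\frac{Q^{\frac12 m_j(m_j-1)-cm_j+jm_j+m_{j-1}(m_{j}+\cdots+m_{R})}}{1-Q^{m_{j}+\cdots+m_{R}}}\Big(y^{-1/2} + \big(y^{1/2}-y^{-1/2}\big)Q^{\ell_1+\cdots+\ell_L}Q^{m_1+\cdots+m_R}\Big),$$ with the conventions $\ell_0=-1$, $m_0=0$.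
   Context: Spin configurations are $\sigma\in\{-1,+1\}^{\mathbb{Z}}$; $\mathcal{B}$ is the set of configurations for which there exist $a,b\in\mathbb{Z}$ with $\sigma_{a-i}=-1$ and $\sigma_{b+i}=+1$ for all $i\in\mathbb{N}$. With $H(\sigma)=\sum_{i\in\mathbb{Z}}\mathbb{1}_{\{\sigma_i\neq\sigma_{i+1}\}}$ (interaction $J(i)\equiv1$) and $f_c(\sigma)=2\sum_{i=1}^\infty(i-c)\mathbb{1}_{\{\sigma_i=-1\}}-2\sum_{i=-\infty}^0(i-c)\mathbb{1}_{\{\sigma_i=1\}}$, the partition function is $Z_{\beta,q,c}=\sum_{\sigma\in\mathcal{B}}e^{-\beta H(\sigma)}q^{f_c(\sigma)}$. In the sum, $L,R\geq 0$ with $L+R>0$, the $\ell_j,m_j$ range over positive integers, and empty products equal $1$. *)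

(* Defs.v *)
From HB Require Import structures.
From mathcomp Require Import all_boot all_order all_algebra.
From mathcomp Require Import all_classical all_reals all_analysis.
Set Implicit Arguments. Unset Strict Implicit. Unset Printing Implicit Defensive.
Import Order.TTheory GRing.Theory Num.Theory.
Local Open Scope classical_set_scope.
Local Open Scope ring_scope.

Section Defs.
Variable R : realType.

Definition spin_config := int -> int.

Definition configB : set spin_config :=
  [set s | (forall i, s i = -1 \/ s i = 1) /\
           exists a b : int, forall i : nat, s (a - i%:Z) = -1 /\ s (b + i%:Z) = 1].

Definition Ham (s : spin_config) : R :=
  \sum_(i \in [set: int]) ((s i != s (i + 1))%:R : R).

Definition fc (c : R) (s : spin_config) : R :=
  2 * (\sum_(i \in [set i : int | 1 <= i]) (i%:~R - c) * (s i == -1)%:R)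
  - 2 * (\sum_(i \in [set i : int | i <= 0]) (i%:~R - c) * (s i == 1)%:R).

Definition Zpart (beta q c : R) : \bar R :=
  \esum_(s in configB) (expR (- beta * Ham s) * q `^ fc c s)%:E.

(* For a finite sequence s = (s_1,...,s_n) (stored 0-indexed), with convention
   s_0 = s0 and parameter cc:
   prod_{j=1}^n Q^{1/2 s_j(s_j-1) + cc s_j + j s_j + s_{j-1}(s_j+...+s_n)}
              / (1 - Q^{s_j+...+s_n}). *)
Definition tailsum (s : seq nat) (k : nat) : nat := \sum_(k <= i < size s) nth 0%N s i.

Definition seq_factor (Q cc s0 : R) (s : seq nat) : R :=
  \prod_(k < size s)
    (let a : R := (nth 0%N s k)%:R in
     let t := tailsum s k in
     let prev : R := if (k : nat) == 0%N then s0 else (nth 0%N s k.-1)%:R in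
     Q `^ (2^-1 * a * (a - 1) + cc * a + (k.+1)%:R * a + prev * t%:R)
     / (1 - Q `^ t%:R)).

Definition pos_tuples (n : nat) : set (seq nat) :=
  [set s | size s = n /\ all (fun x => 0 < x)%N s].

End Defs.

(* Main.v *)
Require Import Defs.
From HB Require Import structures.
From mathcomp Require Import all_boot all_order all_algebra.
From mathcomp Require Import all_classical all_reals all_analysis.
From mathcomp Require Import zify ring lra.
Import Order.TTheory GRing.Theory Num.Theory.
Local Open Scope classical_set_scope.
Local Open Scope ring_scope.
Set Implicit Arguments. Unset Strict Implicit.

Local Close Scope ring_scope.

Fixpoint encp (l g : seq nat) : seq bool :=
  match l, g with
  | a :: l', x :: g' => nseq x.+1 false ++ nseq a true ++ encp l' g'
  | _, _ => [::]
  end.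
Definition enc l g := behead (encp l g).
Definition posl (l : seq nat) := all (fun x => (0 < x)%N) l.

Lemma enc_cons a l x g : enc (a :: l) (x :: g) = nseq x false ++ nseq a true ++ encp l g.
Proof. by []. Qed.

Lemma encpE l g : size g = size l -> encp l g = if l is [::] then [::] else false :: enc l g.
Proof. by case: l => [|a l]; case: g. Qed.

Lemma head_encp l g : head false (encp l g) = false.
Proof. by case: l => [|a l]; case: g. Qed.

Lemma last_nseqT b a : last b (nseq a.+1 true) = true.
Proof. by elim: a. Qed.

Lemma last_enc l g : posl l -> size g = size l -> last false (enc l g) = (l != [::]).
Proof.
elim: l g => [|a l IH] [|x g] //= /andP[a0 pl] [sg].
rewrite enc_cons !last_cat.
case: l IH pl sg => [|b l] IH pl sg.
  case: g sg => // _; case: a a0 => // a _.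
  by rewrite last_nseqT.
rewrite (@encpE (b :: l) g sg) /=. by apply: IH.
Qed.

Lemma trim_enc l g : posl l -> size g = size l -> last true (enc l g).
Proof.
move=> pl sg; have := last_enc pl sg.
case: l pl sg => [|a l] pl sg; first by case: g sg.
by case: (enc _ g).
Qed.

Lemma nseqF_inj x x' u u' : nseq x false ++ true :: u = nseq x' false ++ true :: u' ->
  x = x' /\ u = u'.
Proof.
elim: x x' => [|x IH] [|x'] //=; first by case.
by case=> /IH [-> ->].
Qed.

Lemma nseqT_inj a a' u u' : head false u = false -> head false u' = false ->
  nseq a true ++ u = nseq a' true ++ u' -> a = a' /\ u = u'.
Proof.
move=> hu hu'; elim: a a' => [|a IH] [|a'] //=.
- by move=> E; rewrite E in hu.
- by move=> E; rewrite -E in hu'.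
- by case=> /IH [-> ->].
Qed.

Lemma encp_inj l g l' g' : posl l -> size g = size l -> posl l' -> size g' = size l' ->
  encp l g = encp l' g' -> l = l' /\ g = g'.
Proof.
elim: l g l' g' => [|a l IH] [|x g] [|a' l'] [|x' g'] //=.
move=> /andP[a0 pl] [sg] /andP[a0' pl'] [sg'] [].
case: a a0 => // a _; case: a' a0' => // a' _ /=.
move=> /nseqF_inj [-> E]; move: E.
move=> /nseqT_inj; rewrite !head_encp => /(_ erefl erefl) [-> E].
by have [-> ->] := IH _ _ _ pl sg pl' sg' E.
Qed.

Lemma enc_nil l g : posl l -> size g = size l -> enc l g = [::] -> l = [::].
Proof.
move=> pl sg E; have := last_enc pl sg; rewrite E /=.
by case: l {pl sg E}.
Qed.

Lemma enc_inj l g l' g' : posl l -> size g = size l -> posl l' -> size g' = size l' ->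
  enc l g = enc l' g' -> l = l' /\ g = g'.
Proof.
move=> pl sg pl' sg' E; apply: encp_inj => //.
rewrite (encpE sg) (encpE sg').
case: l pl sg E => [|a l] pl sg E.
  have /(enc_nil pl' sg') -> : enc l' g' = [::] by rewrite -E; case: g sg {E}.
  by [].
case: l' pl' sg' E => [|a' l'] pl' sg' E.
  case: g' sg' E => // _ E.
  by have := enc_nil pl sg E.
by rewrite E.
Qed.

Lemma splitF w : has id w -> exists x u, w = nseq x false ++ true :: u.
Proof.
elim: w => [|b w IH] //=; case: b => /=.
  by move=> _; exists 0%N, w.
by move=> /IH [x [u ->]]; exists x.+1, u.
Qed.

Lemma splitT w : exists a u, w = nseq a true ++ u /\ head false u = false.
Proof.
elim: w => [|b w [a [u [-> hu]]]]; first by exists 0%N, [::].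
case: b; first by exists a.+1, u.
by exists 0%N, (false :: nseq a true ++ u).
Qed.

Lemma enc_surj w : last true w -> exists l g, [/\ posl l, size g = size l & enc l g = w].
Proof.
move: {-1}(size w) (leqnn (size w)) => n; elim: n w => [|n IH] w.
  by case: w => // _ _; exists [::], [::].
move=> sw tw; case: w sw tw => [|b w0] sw tw; first by exists [::], [::].
have : has id (b :: w0).
  apply/hasP; exists (last b w0) => //; exact: mem_last.
move=> /splitF [x [u Ew]]; have [a [v [Eu hv]]] := splitT u.
rewrite Ew Eu in sw tw *.
case: v Eu hv sw tw => [|b' v'] Eu hv sw tw.
  exists [:: a.+1], [:: x]; split => //.
simpl in hv; rewrite hv in sw tw *.
have tv : last true v'.
  move: tw; rewrite last_cat /= last_cat /=.
  by case: (v') => // ->.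
have sv : (size v' <= n)%N.
  move: sw; rewrite /= !size_cat /= !size_cat /=. lia.
have [l [g [pl sg Ev]]] := IH v' sv tv.
have ln : l != [::].
  apply/negP => /eqP l0; subst l; case: g sg Ev => // _ Ev.
  by move: tw; rewrite -Ev /= last_cat /= last_cat.
exists (a.+1 :: l), (x :: g); split.
- exact: pl.
- by rewrite /= sg.
rewrite enc_cons (encpE sg) Ev; case: l ln {pl sg Ev} => // _ _ _.
Qed.

Local Open Scope ring_scope.

Lemma test_lia (a : int) (k : nat) : (`|a| <= k)%N -> 0 <= a + k%:Z.
Proof. lia. Qed.

Section S.
Variable R : realType.

Fixpoint Ew (a : R) (w : seq bool) : R :=
  if w is b :: w' then (b%:R * a + Ew (a + 1) w') else 0.

Lemma Ew_cat a u v : Ew a (u ++ v) = Ew a u + Ew (a + (size u)%:R) v.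
Proof.
elim: u a => [|b u IH] a /=; first by rewrite addr0 add0r.
rewrite IH addrA (_ : a + 1 + (size u)%:R = a + (size u).+1%:R) //.
by rewrite -natr1; ring.
Qed.

Lemma Ew_shift a d w : Ew (a + d) w = Ew a w + d * (count id w)%:R.
Proof.
elim: w a => [|b w IH] a /=; first by rewrite mulr0 addr0.
rewrite (_ : a + d + 1 = (a + 1) + d); last by ring.
rewrite IH natrD; ring.
Qed.

Lemma Ew_nseqF a n : Ew a (nseq n false) = 0.
Proof. by elim: n a => [|n IH] a //=; rewrite IH mul0r addr0. Qed.

Lemma Ew_nseqT a n : Ew a (nseq n true) = n%:R * a + (n%:R * (n%:R - 1)) / 2.
Proof.
elim: n a => [|n IH] a /=; first by rewrite !mul0r addr0.
by rewrite IH -natr1; field.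
Qed.

Lemma Ew_sum a w n : (size w <= n)%N ->
  Ew a w = \sum_(k < n) (nth false w k)%:R * (k%:R + a).
Proof.
elim: w a n => [|b w IH] a n /=.
  by move=> _; rewrite big1 // => k _; rewrite nth_nil mul0r.
case: n => // n; rewrite ltnS => sw.
rewrite big_ord_recl /= add0r (IH (a + 1) n sw); congr (_ + _).
apply: eq_bigr => k _ /=; congr (_ * _).
by rewrite /bump /= add1n -natr1; ring.
Qed.


Lemma count_encp l g : size g = size l -> count id (encp l g) = sumn l.
Proof.
elim: l g => [|a l IH] [|x g] //= [sg].
rewrite !count_cat !count_nseq /= IH //; lia.
Qed.

Lemma count_enc l g : size g = size l -> count id (enc l g) = sumn l.
Proof.
move=> sg; rewrite -(count_encp sg) (encpE sg).
by case: l sg => [|a l] sg.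
Qed.

Fixpoint walls (w : seq bool) : nat :=
  if w is b :: w' then ((b != head false w') + walls w')%N else 0%N.

Lemma walls_cons b w : walls (b :: w) = ((b != head false w) + walls w)%N.
Proof. by []. Qed.

Lemma walls_nseq n b v : walls (nseq n.+1 b ++ v) = ((b != head false v) + walls v)%N.
Proof.
elim: n => [|n IH] //.
by move: IH => /= IH; rewrite eqxx add0n IH.
Qed.

Lemma walls_encp l g : posl l -> size g = size l -> walls (encp l g) = (size l).*2.
Proof.
elim: l g => [|a l IH] [|x g] // /andP[a0 pl] [sg].
change (walls (nseq x.+1 false ++ nseq a true ++ encp l g) = (size l).+1.*2).
rewrite walls_nseq; case: a a0 => // a _.
rewrite walls_nseq head_encp IH //.

Qed.

Lemma walls_enc l g : posl l -> size g = size l ->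
  (walls (enc l g) + head false (enc l g) = (size l).*2)%N.
Proof.
move=> pl sg; rewrite -(walls_encp pl sg) (encpE sg).
case: l pl sg => [|a l] pl sg; first by case: g sg.
rewrite walls_cons addnC; by case: (head false _).
Qed.

Lemma walls_sum w n : (size w <= n)%N ->
  walls w = (\sum_(k < n) (nth false w k != nth false w k.+1))%N.
Proof.
elim: w n => [|b w IH] n /=.
  by move=> _; rewrite big1 // => k _; rewrite !nth_nil.
case: n => // n; rewrite ltnS => sw.
by rewrite big_ord_recl /= (IH n sw) nth0.
Qed.

Definition cfg (wl wr : seq bool) : spin_config := fun i : int =>
  if (0 < i)%R then (if nth false wr (absz i).-1 then -1 else 1)
  else (if nth false wl (absz i) then 1 else -1).

Lemma cfg_pos wl wr (k : nat) : cfg wl wr (k.+1)%:Z = if nth false wr k then -1 else 1.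
Proof. by rewrite /cfg ltz_nat. Qed.

Lemma cfg_npos wl wr (k : nat) : cfg wl wr (- (k%:Z)) = if nth false wl k then 1 else -1.
Proof.
rewrite /cfg abszN /=.
have -> : (0 < - (k%:Z))%R = false by apply/negbTE; rewrite -leNgt oppr_le0.
by [].
Qed.

Lemma int_cases (i : int) : (exists k : nat, i = (k.+1)%:Z) \/ (exists k : nat, i = - (k%:Z)).
Proof.
case: i => [[|m]|m].
- by right; exists 0%N.
- by left; exists m.
- by right; exists m.+1; rewrite NegzE.
Qed.

Lemma sgn_neq (a b : bool) :
  ((if a then 1 else -1 : int) != (if b then 1 else -1)) = (a != b).
Proof. by case: a; case: b. Qed.

Lemma sgn_neq' (a b : bool) :
  ((if a then -1 else 1 : int) != (if b then -1 else 1)) = (a != b).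
Proof. by case: a; case: b. Qed.

Lemma sgn_neq'' (a b : bool) :
  ((if a then 1 else -1 : int) != (if b then -1 else 1)) = (a == b).
Proof. by case: a; case: b. Qed.

Lemma sum_iota (F : nat -> nat) n : (\sum_(k <- iota 0 n) F k = \sum_(k < n) F k)%N.
Proof. by rewrite -(big_mkord xpredT) /index_iota subn0. Qed.

Lemma Ham_cfg wl wr : Ham R (cfg wl wr) =
  ((walls wl + walls wr + (head false wl == head false wr))%N)%:R.
Proof.
set n := (size wl + size wr).+1.
set r := [seq - (k%:Z) | k <- iota 0 n] ++ [seq (k.+1)%:Z | k <- iota 0 n].
have ur : uniq r.
  have i1 : injective (fun k : nat => - (k%:Z)) by move=> ? ? /oppr_inj [].
  have i2 : injective (fun k : nat => (k.+1)%:Z) by move=> ? ? [].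
  rewrite cat_uniq (map_inj_uniq i1) (map_inj_uniq i2) iota_uniq andbT andTb.
  apply/hasPn => i /mapP [k _ ->]; apply/mapP => [[j _]] /eqP.
  lia.
have van : forall i, i \notin r -> cfg wl wr i = cfg wl wr (i + 1).
  move=> i; case: (int_cases i) => [[k ->]|[k ->]] ni.
  - have kn : (n <= k)%N.
      rewrite leqNgt; apply/negP => kn; move: ni; rewrite mem_cat negb_or => /andP[_].
      by move=> /negP; apply; apply/mapP; exists k; rewrite ?mem_iota.
    rewrite (_ : (k.+1)%:Z + 1 = (k.+2)%:Z); last by lia.
    by rewrite !cfg_pos !nth_default //; lia.
  - have kn : (n <= k)%N.
      rewrite leqNgt; apply/negP => kn; move: ni; rewrite mem_cat negb_or => /andP[+ _].
      by move=> /negP; apply; apply/mapP; exists k; rewrite ?mem_iota.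
    rewrite (_ : - (k%:Z) + 1 = - ((k.-1)%:Z)); last by lia.
    by rewrite !cfg_npos !nth_default //; lia.
rewrite /Ham (fsbigE r) //; last first.
  by move=> i _ ni; rewrite van ?eqxx.
rewrite big_cat !big_map.
under eq_bigl do rewrite in_setT.
under [X in _ + X = _]eq_bigl do rewrite in_setT.
rewrite -!natr_sum -natrD; congr (_%:R).
rewrite !sum_iota big_ord_recl.
rewrite (_ : - ((0%N)%:Z) + 1 = (0%N.+1)%:Z) // cfg_npos cfg_pos sgn_neq'' !nth0.
rewrite (@walls_sum wl (size wl + size wr)) ?leq_addr //.
rewrite (@walls_sum wr n); last by rewrite /n; lia.
set A := (\sum_(i < _) _)%N; set B := (\sum_(i < n) _)%N.
set A' := (\sum_(k < _) _)%N; set B' := (\sum_(k < n) _)%N.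
suff [-> ->] : A = A' /\ B = B' by lia.
split; apply: eq_bigr => k _.
  rewrite lift0 (_ : - ((k.+1)%:Z) + 1 = - (k%:Z)); last by lia.
  by rewrite !cfg_npos sgn_neq eq_sym.
rewrite (_ : (k.+1)%:Z + 1 = (k.+2)%:Z); last by lia.
by rewrite !cfg_pos sgn_neq'.
Qed.

Lemma sum_iotaR (F : nat -> R) n : \sum_(k <- iota 0 n) F k = \sum_(k < n) F k.
Proof. by rewrite -(big_mkord xpredT) /index_iota subn0. Qed.

Lemma fc_cfg c wl wr : fc c (cfg wl wr) = 2 * (Ew (1 - c) wr + Ew c wl).
Proof.
set n := (size wl + size wr).+1.
have E1 : \sum_(i \in [set i : int | 1 <= i]) (i%:~R - c) * (cfg wl wr i == -1)%:R
          = Ew (1 - c) wr.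
  have i2 : injective (fun k : nat => (k.+1)%:Z) by move=> ? ? [].
  rewrite (fsbigE [seq (k.+1)%:Z | k <- iota 0 n]).
  - rewrite big_map (eq_bigl xpredT); last by move=> k; apply: mem_set => /=; lia.
    rewrite sum_iotaR (@Ew_sum _ wr n); last by rewrite /n; lia.
    apply: eq_bigr => k _; rewrite cfg_pos.
    have -> : ((k.+1)%:Z)%:~R = (k.+1)%:R :> R by [].
    by case: (nth false wr k) => /=; rewrite -natr1; ring.
  - by rewrite (map_inj_uniq i2) iota_uniq.
  - move=> i Hi; have /mapP [k _ ->] : i \in [seq (k.+1)%:Z | k <- iota 0 n] := Hi.
    rewrite /=; lia.
  - move=> i i1 ni; have {}i1 : 1 <= i := i1; case: (int_cases i) => [[k Ek]|[k Ek]]; subst i; last by lia.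
    have kn : (n <= k)%N.
      rewrite leqNgt; apply/negP => kn; move/negP: ni; apply.
      by apply/mapP; exists k; rewrite ?mem_iota.
    by rewrite cfg_pos nth_default ?mulr0 //; lia.
have E2 : \sum_(i \in [set i : int | i <= 0]) (i%:~R - c) * (cfg wl wr i == 1)%:R
          = - Ew c wl.
  have i1 : injective (fun k : nat => - (k%:Z)) by move=> ? ? /oppr_inj [].
  rewrite (fsbigE [seq - (k%:Z) | k <- iota 0 n]).
  - rewrite big_map (eq_bigl xpredT); last by move=> k; apply: mem_set => /=; lia.
    rewrite sum_iotaR (@Ew_sum _ wl n); last by rewrite /n; lia.
    rewrite -sumrN; apply: eq_bigr => k _; rewrite cfg_npos.
    have -> : (- (k%:Z))%:~R = - (k%:R) :> R by rewrite mulrNz.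
    by case: (nth false wl k) => /=; ring.
  - by rewrite (map_inj_uniq i1) iota_uniq.
  - move=> i Hi; have /mapP [k _ ->] : i \in [seq - (k%:Z) | k <- iota 0 n] := Hi.
    rewrite /=; lia.
  - move=> i i1' ni; have {}i1' : i <= 0 := i1'; case: (int_cases i) => [[k Ek]|[k Ek]]; subst i; first by lia.
    have kn : (n <= k)%N.
      rewrite leqNgt; apply/negP => kn; move/negP: ni; apply.
      by apply/mapP; exists k; rewrite ?mem_iota.
    by rewrite cfg_npos nth_default ?mulr0 //; lia.
by rewrite /fc E1 E2; ring.
Qed.

End S.

Fixpoint trim (w : seq bool) : seq bool :=
  if w is b :: w' then (if b || (trim w' != [::]) then b :: trim w' else [::]) else [::].

Lemma nth_trim w k : nth false (trim w) k = nth false w k.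
Proof.
elim: w k => [|b w IH] k //=.
case: ifP => [_|/norP [/negbTE -> /negPn /eqP E]].
  by case: k => //= k; rewrite IH.
by case: k => //= k; rewrite -IH E nth_nil.
Qed.

Lemma last_trim w : last true (trim w).
Proof.
elim: w => [|b w IH] //=.
case: ifP => // /orP [-> | ne].
  by case: (trim w) IH.
by case: (trim w) IH ne.
Qed.

Lemma last_nth_true v : v != [::] -> last true v -> nth false v (size v).-1.
Proof. by case: v => // b v _; rewrite nth_last. Qed.

Lemma trimmed_eq u v : last true u -> last true v ->
  (forall k, nth false u k = nth false v k) -> u = v.
Proof.
move=> tu tv E.
have H : forall u v, last true v -> (forall k, nth false u k = nth false v k) ->
    (size v <= size u)%N.
  move=> u' v' tv' E'; rewrite leqNgt; apply/negP => lt.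
  have vn : v' != [::] by case: v' lt {tv' E'}.
  have := last_nth_true vn tv'; rewrite -E' nth_default //.
  by case: (size v') lt => //= m; rewrite ltnS.
apply: (@eq_from_nth _ false).
  by apply/eqP; rewrite eqn_leq !H.
by move=> k _; apply: E.
Qed.

Definition TW := [set ww : seq bool * seq bool | last true ww.1 /\ last true ww.2].

Lemma cfg_configB wl wr : configB (cfg wl wr).
Proof.
split.
  move=> i; case: (int_cases i) => [[k ->]|[k ->]].
    by rewrite cfg_pos; case: (nth _ _ _); [left|right].
  by rewrite cfg_npos; case: (nth _ _ _); [right|left].
exists (- ((size wl)%:Z)), ((size wr).+1)%:Z => i; split.
  rewrite (_ : - ((size wl)%:Z) - i%:Z = - ((size wl + i)%N%:Z)); last by lia.
  by rewrite cfg_npos nth_default // leq_addr.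
rewrite (_ : ((size wr).+1)%:Z + i%:Z = ((size wr + i)%N.+1)%:Z); last by lia.
by rewrite cfg_pos nth_default // leq_addr.
Qed.

Lemma sgn_inj (a b : bool) : (if a then 1 else -1 : int) = (if b then 1 else -1) -> a = b.
Proof. by case: a; case: b. Qed.
Lemma sgn_inj' (a b : bool) : (if a then -1 else 1 : int) = (if b then -1 else 1) -> a = b.
Proof. by case: a; case: b. Qed.

Lemma cfg_inj wl wr wl' wr' : last true wl -> last true wr -> last true wl' -> last true wr' ->
  cfg wl wr = cfg wl' wr' -> wl = wl' /\ wr = wr'.
Proof.
move=> t1 t2 t3 t4 E; split; apply: trimmed_eq => // k.
  by apply: sgn_inj; rewrite -(cfg_npos wl wr) -(cfg_npos wl' wr') E.
by apply: sgn_inj'; rewrite -(cfg_pos wl wr) -(cfg_pos wl' wr') E.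
Qed.

Lemma cfg_surj s : configB s -> exists wl wr, [/\ last true wl, last true wr & cfg wl wr = s].
Proof.
move=> [pm [a [b hab]]].
set N := (`|a| + `|b|)%N.
have Hr : forall k, (N <= k)%N -> s (k.+1)%:Z = 1.
  move=> k kN; have := (hab (absz ((k.+1)%:Z - b))).2.
  by rewrite (_ : b + _ = (k.+1)%:Z) //; lia.
have Hl : forall k, (N <= k)%N -> s (- (k%:Z)) = -1.
  move=> k kN; have := (hab (absz (a + k%:Z))).1.
  by rewrite (_ : a - _ = - (k%:Z)) //; lia.
exists (trim (mkseq (fun k => s (- (k%:Z)) == 1) N)), (trim (mkseq (fun k => s (k.+1)%:Z == -1) N)).
split; try exact: last_trim.
apply: funext => i; case: (int_cases i) => [[k ->]|[k ->]].
  rewrite cfg_pos nth_trim.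
  case: (ltnP k N) => kN; last by rewrite nth_default ?size_mkseq ?Hr.
  rewrite nth_mkseq //.
  by case: (pm (k.+1)%:Z) => ->.
rewrite cfg_npos nth_trim.
case: (ltnP k N) => kN; last by rewrite nth_default ?size_mkseq ?Hl.
rewrite nth_mkseq //.
by case: (pm (- (k%:Z))) => ->.
Qed.

Section S3.
Variable R : realType.

Lemma esumZ (T : choiceType) (I : set T) (r : R) (a : T -> \bar R) :
  0 <= r -> (forall i, I i -> (0 <= a i)%E) ->
  \esum_(i in I) (r%:E * a i)%E = (r%:E * \esum_(i in I) a i)%E.
Proof.
move=> r0 a0; rewrite esum_mkcond [in RHS]esum_mkcond.
set b := fun i => if i \in I then a i else 0%E.
have b0 : forall i, (0 <= b i)%E.
  by move=> i; rewrite /b; case: ifP => // /set_mem /a0.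
have -> : (fun i => if i \in I then (r%:E * a i)%E else 0%E) = (fun i => r%:E * b i)%E.
  by apply: funext => i; rewrite /b; case: ifP; rewrite ?mule0.
rewrite /esum -ereal_supZl //; last first.
  by apply/set0P; exists (\sum_(x \in set0) b x)%E; exists set0 => //; exact: fsets_set0.
rewrite image_comp; congr ereal_sup; apply: eq_imagel => A _ /=.
by rewrite ge0_mule_fsumr.
Qed.

Lemma esum_geom (N r : R) : 0 <= N -> 0 <= r < 1 ->
  \esum_(x in [set: nat]) (N * r ^+ x)%:E = (N / (1 - r))%:E.
Proof.
move=> N0 /andP[r0 r1].
rewrite -nneseries_esumT; last by move=> n; rewrite lee_fin mulr_ge0 // exprn_ge0.
under eq_fun do rewrite sumEFin.
have -> : (fun n => (\sum_(0 <= i < n) N * r ^+ i)%:E) = EFin \o series (geometric N r).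
  by apply: funext => n.
have H1 : `|r| < 1 by rewrite ger0_norm.
rewrite EFin_lim; last exact: is_cvg_geometric_series.
have /(@cvg_unique _ (@Rhausdorff R)) := @cvg_geometric_series _ N _ H1.
move/(_ _ (@is_cvg_geometric_series _ N _ H1)) => E.
by rewrite -E.
Qed.

Lemma esum_prod (T1 T2 : choiceType) (A : set T1) (B : set T2) (f : T1 -> R) (h : T2 -> R)
    (F H : R) :
  (forall x, A x -> 0 <= f x) -> (forall y, B y -> 0 <= h y) ->
  \esum_(x in A) (f x)%:E = F%:E -> \esum_(y in B) (h y)%:E = H%:E ->
  \esum_(z in A `*` B) (f z.1 * h z.2)%:E = (F * H)%:E.
Proof.
move=> f0 h0 EF EH.
have H0 : 0 <= H by rewrite -lee_fin -EH esum_ge0 // => y /h0; rewrite lee_fin.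
rewrite -(@esum_esum _ _ _ A (fun=> B) (fun x y => (f x * h y)%:E)); last first.
  by move=> i j /f0 ? /h0 ?; rewrite lee_fin mulr_ge0.
transitivity (\esum_(x in A) (H%:E * (f x)%:E))%E.
  apply: eq_esum => x Ax.
  transitivity (\esum_(y in B) ((f x)%:E * (h y)%:E))%E.
    by apply: eq_esum => y _; rewrite EFinM.
  rewrite esumZ ?EH; first by rewrite muleC.
    exact: f0.
  by move=> y /h0; rewrite lee_fin.
rewrite esumZ ?EF //; first by rewrite -EFinM mulrC.
Qed.

End S3.

Lemma tailsum_cons0 a l : tailsum (a :: l) 0 = (a + sumn l)%N.
Proof.
rewrite /tailsum /= big_nat_recl //=; congr (_ + _)%N.
elim: l => [|b l IH]; first by rewrite big_geq.
rewrite /= big_nat_recl //=; congr (_ + _)%N.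
by rewrite -IH.
Qed.

Lemma tailsum_consS a l k : tailsum (a :: l) k.+1 = tailsum l k.
Proof. by rewrite /tailsum big_add1. Qed.

Section S4.
Variable R : realType.

Lemma sf_cons (Q cc s0 : R) a l :
  seq_factor Q cc s0 (a :: l) =
  Q `^ (2^-1 * a%:R * (a%:R - 1) + cc * a%:R + 1 * a%:R + s0 * (a + sumn l)%N%:R)
    / (1 - Q `^ (a + sumn l)%N%:R) * seq_factor Q (cc + 1) a%:R l.
Proof.
rewrite /seq_factor /= big_ord_recl /= tailsum_cons0; congr (_ * _).
apply: eq_bigr => i _; rewrite /bump /= add0n add1n tailsum_consS.
have -> : (nth 0%N (a :: l) i)%:R = (if (i : nat) == 0%N then a%:R else (nth 0%N l i.-1)%:R :> R).
  by case: (nat_of_ord i).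
congr (Q `^ _ / _).
have e : (i.+2)%:R = (i.+1)%:R + 1 :> R by rewrite natr1.
rewrite e. set A := (if _ then _ else _) * _. set B := nth _ _ _. set C := (i.+1)%:R. ring.
Qed.

Lemma Ew_encp (b : R) l gs : size gs = size l -> Ew b (encp l gs) = Ew (b + 1) (enc l gs).
Proof.
move=> sg; rewrite (encpE sg); case: l sg => [|a l] sg; first by case: gs sg.
by rewrite /= mul0r add0r.
Qed.

Lemma Ew_enc_cons (cc s0 : R) a l x gs : size gs = size l ->
  Ew (cc + s0 + 1) (enc (a :: l) (x :: gs)) =
  (2^-1 * a%:R * (a%:R - 1) + cc * a%:R + 1 * a%:R + s0 * (a + sumn l)%N%:R)
  + x%:R * (a + sumn l)%N%:R + Ew (cc + 1 + a%:R + 1) (enc l gs).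
Proof.
move=> sg; rewrite enc_cons !Ew_cat Ew_nseqF Ew_nseqT Ew_encp // !size_nseq add0r.
rewrite (_ : cc + s0 + 1 + x%:R + a%:R + 1 = (cc + 1 + a%:R + 1) + (s0 + x%:R)); last by ring.
rewrite Ew_shift count_enc // natrD.
set E := Ew _ _; set A := a%:R; set X := x%:R; set S := (sumn l)%:R.
by field.
Qed.

Lemma powRD' (Q u v : R) : 0 < Q -> Q `^ (u + v) = Q `^ u * Q `^ v.
Proof. by move=> Q0; rewrite powRD // (gt_eqF Q0) implybT. Qed.

Lemma powR_nat_mul (Q t : R) (x : nat) : Q `^ (x%:R * t) = (Q `^ t) ^+ x.
Proof. by rewrite mulrC powRrM powR_mulrn // powR_ge0. Qed.

Lemma side_sum (Q cc s0 : R) l : 0 < Q < 1 -> posl l ->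
  \esum_(g in [set g : seq nat | size g = size l]) (Q `^ Ew (cc + s0 + 1) (enc l g))%:E
  = (seq_factor Q cc s0 l)%:E.
Proof.
move=> /andP[Q0 Q1]; elim: l cc s0 => [|a l IH] cc s0 pl.
  rewrite (_ : [set g : seq nat | size g = size [::]] = [set [::]]); last first.
    by apply/seteqP; split => g /=; [move/size0nil | move=> ->].
  rewrite esum_set1 ?lee_fin ?powR_ge0 //.
  by rewrite /seq_factor big_ord0 /= powRr0.
have /andP [a0 pl'] : (0 < a)%N && posl l := pl.
set D := [set g : seq nat | size g = size l].
rewrite (reindex_esum ([set: nat] `*`` (fun=> D)) _ (fun p => p.1 :: p.2)); last first.
  split.
  - by move=> [x gs] [_ /= sg] /=; rewrite sg.
  - by move=> [x gs] [x' gs'] _ _ /= [-> ->].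
  - move=> [|x gs] //= sg; exists (x, gs) => //.
    by split => //; case: sg.
rewrite -(@esum_esum _ _ _ [set: nat] (fun=> D)
   (fun x gs => (Q `^ Ew (cc + s0 + 1) (enc (a :: l) (x :: gs)))%:E)); last first.
  by move=> *; rewrite lee_fin powR_ge0.
set K := Q `^ (2^-1 * a%:R * (a%:R - 1) + cc * a%:R + 1 * a%:R + s0 * (a + sumn l)%N%:R).
set r := Q `^ (a + sumn l)%N%:R.
have K0 : 0 <= K by rewrite powR_ge0.
have r0 : 0 <= r by rewrite powR_ge0.
transitivity (\esum_(x in [set: nat]) ((K * r ^+ x)%:E *
    \esum_(gs in D) (Q `^ Ew (cc + 1 + a%:R + 1) (enc l gs))%:E))%E.
  apply: eq_esum => x _; rewrite -esumZ; last by move=> *; rewrite lee_fin powR_ge0.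
    apply: eq_esum => gs sg; rewrite -EFinM; congr (_%:E).
    by rewrite (Ew_enc_cons _ _ _ _ sg) [Q `^ (_ + Ew _ _)]powRD' // [Q `^ (_ + x%:R * _)]powRD' // powR_nat_mul.
  by rewrite mulr_ge0 // exprn_ge0.
rewrite IH //.
set sf := seq_factor _ _ _ l.
have sf0 : 0 <= sf by rewrite -lee_fin -IH // esum_ge0 // => *; rewrite lee_fin powR_ge0.
transitivity (\esum_(x in [set: nat]) ((sf * K) * r ^+ x)%:E)%E.
  by apply: eq_esum => x _; rewrite -EFinM; congr (_%:E); rewrite mulrC mulrA.
have r1 : r < 1.
  rewrite /r powR_mulrn ?(ltW Q0) // exprn_ilt1 ?(ltW Q0) //.
  by rewrite -lt0n addn_gt0 a0.
rewrite esum_geom ?mulr_ge0 ?r0 ?r1 //.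
rewrite sf_cons -/K -/r -/sf; congr (_%:E); set u := (1 - r)^-1; rewrite /u; set u' := (1 - r)^-1; ring.
Qed.

End S4.

Section S5.
Variable R : realType.

Lemma W_Phi (c beta q : R) l m gl gm : 0 < q -> posl l -> posl m ->
  size gl = size l -> size gm = size m ->
  expR (- beta * Ham R (cfg (enc l gl) (enc m gm))) * q `^ fc c (cfg (enc l gl) (enc m gm)) =
  expR (- (2 * beta)) ^+ (size l + size m) *
  (if head false (enc l gl) || head false (enc m gm) then expR (- (2 * beta)) `^ (- 2^-1)
   else expR (- (2 * beta)) `^ (2^-1)) *
  ((q ^+ 2) `^ Ew c (enc l gl) * (q ^+ 2) `^ Ew (1 - c) (enc m gm)).
Proof.
move=> q0 pl pm sl sm.
rewrite Ham_cfg fc_cfg powRrM powR_mulrn ?(ltW q0) // powRD'; last by rewrite exprn_gt0.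
rewrite [X in _ = _ * X]mulrC; congr (_ * _).
have hl := walls_enc pl sl; have hr := walls_enc pm sm.
move: hl hr; set a := walls _; set b := walls _; set n := (size l + size m)%N.
rewrite -powR_mulrn ?expR_ge0 //.
case: (head false (enc l gl)); case: (head false (enc m gm)) => /= hl hr.
- have HH : (a + b + 1).+1 = (n + n)%N by rewrite /n; lia.
  have HR : ((a + b + 1)%N%:R + 1 = n%:R + n%:R :> R) by rewrite natr1 -natrD HH.
  rewrite -!expRM -expRD; congr expR; move: HR; set H := _%:R; set N := n%:R.
  by move=> e; rewrite (_ : H = N + N - 1); [field | lra].
- have HH : (a + b + 0).+1 = (n + n)%N by rewrite /n; lia.
  have HR : ((a + b + 0)%N%:R + 1 = n%:R + n%:R :> R) by rewrite natr1 -natrD HH.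
  rewrite -!expRM -expRD; congr expR; move: HR; set H := _%:R; set N := n%:R.
  by move=> e; rewrite (_ : H = N + N - 1); [field | lra].
- have HH : (a + b + 0).+1 = (n + n)%N by rewrite /n; lia.
  have HR : ((a + b + 0)%N%:R + 1 = n%:R + n%:R :> R) by rewrite natr1 -natrD HH.
  rewrite -!expRM -expRD; congr expR; move: HR; set H := _%:R; set N := n%:R.
  by move=> e; rewrite (_ : H = N + N - 1); [field | lra].
- have HH : (a + b + 1) = (n + n).+1%N by rewrite /n; lia.
  have HR : ((a + b + 1)%N%:R = n%:R + n%:R + 1 :> R) by rewrite -natrD natr1; congr (_%:R); lia.
  rewrite -!expRM -expRD; congr expR; move: HR; set H := _%:R; set N := n%:R.
  by move=> ->; field.
Qed.

Definition Dg (l : seq nat) := [set g : seq nat | size g = size l].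
Definition shift1 (g : seq nat) := if g is x :: g' then x.+1 :: g' else [::].

Lemma size_shift1 g : size (shift1 g) = size g.
Proof. by case: g. Qed.

Lemma shift1_inj g g' : shift1 g = shift1 g' -> g = g'.
Proof. by case: g => [|x g]; case: g' => [|x' g'] //= [-> ->]. Qed.

Lemma enc_shift1 l g : size g = size l ->
  enc l (shift1 g) = if l is [::] then [::] else false :: enc l g.
Proof. by case: l => [|a l]; case: g. Qed.

Lemma Ew_shift1 (b : R) l g : size g = size l ->
  Ew b (enc l (shift1 g)) = Ew b (enc l g) + (sumn l)%:R.
Proof.
move=> sg; rewrite enc_shift1 //; case: l sg => [|a l] sg.
  by case: g sg => //= _; rewrite addr0.
rewrite [Ew b (false :: _)]/= mul0r add0r Ew_shift count_enc // mul1r.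
done.
Qed.

Lemma head_shift1 l g : size g = size l -> head false (enc l (shift1 g)) = false.
Proof. by move=> sg; rewrite enc_shift1 //; case: l sg. Qed.

Lemma shift1_surj l g : posl l -> size g = size l -> ~~ head false (enc l g) ->
  exists2 g', size g' = size l & shift1 g' = g.
Proof.
case: l => [|a l] pl sg hg.
  by exists [::] => //; case: g sg hg.
case: g sg hg => [|[|x] g] // sg hg.
  move: pl hg => /andP [a0 _]; rewrite enc_cons /=.
  by case: (a) a0.
by exists (x :: g).
Qed.

Lemma side_l (Q c : R) l : 0 < Q < 1 -> posl l ->
  \esum_(g in Dg l) (Q `^ Ew c (enc l g))%:E = (seq_factor Q c (-1) l)%:E.
Proof.
move=> hQ pl; rewrite -(side_sum _ _ hQ pl).
by rewrite (_ : c + -1 + 1 = c) //; ring.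
Qed.

Lemma side_r (Q c : R) m : 0 < Q < 1 -> posl m ->
  \esum_(g in Dg m) (Q `^ Ew (1 - c) (enc m g))%:E = (seq_factor Q (- c) 0 m)%:E.
Proof.
move=> hQ pm; rewrite -(side_sum _ _ hQ pm).
by rewrite (_ : - c + 0 + 1 = 1 - c) //; ring.
Qed.

Lemma sf_ge0 (Q cc s0 : R) l : 0 < Q < 1 -> posl l -> 0 <= seq_factor Q cc s0 l.
Proof.
move=> hQ pl; rewrite -lee_fin -(side_sum _ _ hQ pl) esum_ge0 // => *.
by rewrite lee_fin powR_ge0.
Qed.

Lemma inner_sum (c beta q : R) l m : 0 < q < 1 -> posl l -> posl m ->
  \esum_(gg in Dg l `*` Dg m)
     (expR (- beta * Ham R (cfg (enc l gg.1) (enc m gg.2))) *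
      q `^ fc c (cfg (enc l gg.1) (enc m gg.2)))%:E
  = (expR (- (2 * beta)) ^+ (size l + size m) *
     seq_factor (q ^+ 2) c (-1) l * seq_factor (q ^+ 2) (- c) 0 m *
     (expR (- (2 * beta)) `^ (- 2^-1) +
      (expR (- (2 * beta)) `^ (2^-1) - expR (- (2 * beta)) `^ (- 2^-1)) *
      (q ^+ 2) `^ (sumn l)%:R * (q ^+ 2) `^ (sumn m)%:R))%:E.
Proof.
move=> /andP [q0 q1] pl pm.
have hQ : 0 < q ^+ 2 < 1.
  by rewrite exprn_gt0 //= expr_lt1 ?(ltW q0).
under eq_esum => gg [sl sm] do rewrite W_Phi //.
set y := expR (- (2 * beta)); set Q := q ^+ 2; set n := (size l + size m)%N.
set P := fun gg : seq nat * seq nat => Q `^ Ew c (enc l gg.1) * Q `^ Ew (1 - c) (enc m gg.2).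
set U := fun gg : seq nat * seq nat => head false (enc l gg.1) || head false (enc m gg.2).
set J := Dg l `*` Dg m.
set B := [set gg : seq nat * seq nat | ~~ U gg].
have P0 : forall gg, (0 <= (P gg)%:E)%E by move=> gg; rewrite lee_fin mulr_ge0 ?powR_ge0.
have y0 : 0 <= y by rewrite expR_ge0.
have yn0 : 0 <= y ^+ n by rewrite exprn_ge0.
set X := seq_factor Q c (-1) l * seq_factor Q (- c) 0 m.
have EP : \esum_(gg in J) (P gg)%:E = X%:E.
  apply: (esum_prod (f := fun g => Q `^ Ew c (enc l g)) (h := fun g => Q `^ Ew (1 - c) (enc m g))).
  - by move=> *; rewrite powR_ge0.
  - by move=> *; rewrite powR_ge0.
  - exact: side_l.
  - exact: side_r.
set S := Q `^ (sumn l)%:R * Q `^ (sumn m)%:R.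
have S0 : 0 <= S by rewrite mulr_ge0 ?powR_ge0.
have E1 : \esum_(gg in J `&` B) (P gg)%:E = (S * X)%:E.
  rewrite (reindex_esum J _ (fun gg => (shift1 gg.1, shift1 gg.2))); last first.
    split.
    - move=> [g1 g2] [/= s1 s2]; split; first by rewrite /J /Dg /= !size_shift1.
      by rewrite /B /U /= !head_shift1.
    - by move=> [g1 g2] [g1' g2'] _ _ /= [/shift1_inj -> /shift1_inj ->].
    - move=> [g1 g2] [[/= s1 s2]]; rewrite /B /U /= negb_or => /andP [h1 h2].
      have [g1' s1' <-] := shift1_surj pl s1 h1.
      have [g2' s2' <-] := shift1_surj pm s2 h2.
      by exists (g1', g2').
  transitivity (\esum_(gg in J) (S%:E * (P gg)%:E))%E; last by rewrite esumZ // EP -EFinM.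
  apply: eq_esum => [[g1 g2]] [/= s1 s2]; rewrite -EFinM; congr (_%:E).
  rewrite /P /S /= !Ew_shift1 // !powRD' //; last by case/andP: hQ.
  all: try by case/andP: hQ.
  set a1 := Q `^ Ew c _; set a2 := Q `^ Ew _ _; set b1 := Q `^ _; set b2 := Q `^ _.
  by rewrite /=; ring.
have E2 : \esum_(gg in J `&` ~` B) (P gg)%:E = ((1 - S) * X)%:E.
  have H := esumID B J (fun gg => (P gg)%:E) (fun gg _ => P0 gg).
  rewrite EP E1 in H.
  have -> : \esum_(gg in J `&` ~` B) (P gg)%:E = (X%:E - (S * X)%:E)%E.
    by rewrite H [((S * X)%:E + _)%E]addeC addeK.
  by rewrite -EFinB; congr (_%:E); ring.
rewrite (esumID B); last by move=> gg _; rewrite lee_fin !mulr_ge0 ?powR_ge0 //; case: ifP; rewrite powR_ge0.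
transitivity (((y ^+ n * y `^ (2^-1))%:E * \esum_(gg in J `&` B) (P gg)%:E) +
              ((y ^+ n * y `^ (- 2^-1))%:E * \esum_(gg in J `&` ~` B) (P gg)%:E))%E.
  congr (_ + _)%E.
    rewrite -esumZ; [|by rewrite mulr_ge0 ?powR_ge0 |by move=> gg _; exact: P0].
    apply: eq_esum => gg [_ Bg]; move: Bg; rewrite /B /U /= => /negbTE ->.
    by rewrite -EFinM.
  rewrite -esumZ; [|by rewrite mulr_ge0 ?powR_ge0 |by move=> gg _; exact: P0].
  apply: eq_esum => gg [_ nB].
  have Ug : U gg by apply/negPn/negP.
  move: Ug; rewrite /U => ->.
  by rewrite -EFinM.
rewrite E1 E2 -!EFinM -EFinD; congr (_%:E).
rewrite /S /X.
set a1 := Q `^ (sumn l)%:R; set a2 := Q `^ (sumn m)%:R.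
set s1 := seq_factor _ _ _ l; set s2 := seq_factor _ _ _ m.
set p1 := y `^ 2^-1; set p2 := y `^ (- 2^-1); set yn := y ^+ n.
ring.
Qed.

End S5.

Definition Igm := [set lm : seq nat * seq nat | posl lm.1 /\ posl lm.2].
Definition Jg (lm : seq nat * seq nat) := Dg lm.1 `*` Dg lm.2.
Definition Phi (z : (seq nat * seq nat) * (seq nat * seq nat)) :=
  cfg (enc z.1.1 z.2.1) (enc z.1.2 z.2.2).

Lemma Phi_bij : set_bij (Igm `*`` Jg) configB Phi.
Proof.
split.
- by move=> z _; exact: cfg_configB.
- move=> [[l m] [gl gm]] [[l' m'] [gl' gm']] /set_mem [/= [pl pm] [/= sl sm]]
    /set_mem [/= [pl' pm'] [/= sl' sm']] /= E.
  have [E1 E2] := cfg_inj (trim_enc pl sl) (trim_enc pm sm) (trim_enc pl' sl')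
    (trim_enc pm' sm') E.
  case: (enc_inj pl sl pl' sl' E1) => /= -> ->.
  by case: (enc_inj pm sm pm' sm' E2) => /= -> ->.
- move=> s Bs; have [wl [wr [tl tr <-]]] := cfg_surj Bs.
  have [l [gl [pl sl <-]]] := enc_surj tl; have [m [gm [pm sm <-]]] := enc_surj tr.
  by exists ((l, m), (gl, gm)).
Qed.

Section S6.
Variable R : realType.

Lemma T_ge0 (c beta q : R) l m : 0 < q < 1 -> posl l -> posl m ->
  0 <= expR (- (2 * beta)) ^+ (size l + size m) *
     seq_factor (q ^+ 2) c (-1) l * seq_factor (q ^+ 2) (- c) 0 m *
     (expR (- (2 * beta)) `^ (- 2^-1) +
      (expR (- (2 * beta)) `^ (2^-1) - expR (- (2 * beta)) `^ (- 2^-1)) *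
      (q ^+ 2) `^ (sumn l)%:R * (q ^+ 2) `^ (sumn m)%:R).
Proof.
move=> /andP [q0 q1] pl pm.
have hQ : 0 < q ^+ 2 < 1 by rewrite exprn_gt0 //= expr_lt1 ?(ltW q0).
have /andP [Q0 Q1] := hQ.
rewrite !mulr_ge0 ?exprn_ge0 ?expR_ge0 ?sf_ge0 //.
rewrite !powR_mulrn ?(ltW Q0) //.
set p1 := _ `^ 2^-1; set p2 := _ `^ (- 2^-1).
set a1 := (q ^+ 2) ^+ _; set a2 := (q ^+ 2) ^+ _.
have p10 : 0 <= p1 by rewrite powR_ge0.
have p20 : 0 <= p2 by rewrite powR_ge0.
have a10 : 0 <= a1 by rewrite exprn_ge0 // ltW.
have a20 : 0 <= a2 by rewrite exprn_ge0 // ltW.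
have a11 : a1 <= 1 by rewrite exprn_ile1 // ltW.
have a21 : a2 <= 1 by rewrite exprn_ile1 // ltW.
rewrite (_ : p2 + (p1 - p2) * a1 * a2 = p2 * (1 - a1 * a2) + p1 * (a1 * a2)); last by ring.
rewrite addr_ge0 // !mulr_ge0 // subr_ge0 mulr_ile1 //.
Qed.

End S6.

Unset Implicit Arguments.

Theorem corollary4p3 (R : realType) (c beta q : R) :
  0 <= beta -> 0 < q < 1 ->
  let Q := q ^+ 2 in
  let y := expR (- (2 * beta)) in
  Zpart beta q c =
    ((y `^ (2^-1))%:E +
     \esum_(LR in [set LR : nat * nat | (0 < LR.1 + LR.2)%N])
       \esum_(l in pos_tuples LR.1)
         \esum_(m in pos_tuples LR.2)
           (y ^+ (LR.1 + LR.2) *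
            seq_factor Q c (-1) l * seq_factor Q (- c) 0 m *
            (y `^ (- 2^-1) + (y `^ (2^-1) - y `^ (- 2^-1)) *
               Q `^ (sumn l)%:R * Q `^ (sumn m)%:R))%:E)%E.
Proof.
move=> hb hq Q y; rewrite /Zpart {}/Q {}/y.
rewrite (reindex_esum (Igm `*`` Jg) configB Phi); last exact: Phi_bij.
set F := fun (l m : seq nat) => expR (- (2 * beta)) ^+ (size l + size m) *
     seq_factor (q ^+ 2) c (-1) l * seq_factor (q ^+ 2) (- c) 0 m *
     (expR (- (2 * beta)) `^ (- 2^-1) +
      (expR (- (2 * beta)) `^ (2^-1) - expR (- (2 * beta)) `^ (- 2^-1)) *
      (q ^+ 2) `^ (sumn l)%:R * (q ^+ 2) `^ (sumn m)%:R).
transitivity (\esum_(lm in Igm) \esum_(gg in Jg lm)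
   (expR (- beta * Ham R (Phi (lm, gg))) * q `^ fc c (Phi (lm, gg)))%:E)%E.
  rewrite esum_esum; first by apply: eq_esum => -[lm gg].
  by move=> *; rewrite lee_fin mulr_ge0 ?expR_ge0 ?powR_ge0.
transitivity (\esum_(lm in Igm) (F lm.1 lm.2)%:E)%E.
  apply: eq_esum => -[l m] [/= pl pm].
  exact: inner_sum.
have F0 : forall l m, posl l -> posl m -> 0 <= F l m.
  by move=> l m pl pm; apply: T_ge0.
rewrite (esumID [set ([::], [::])]); last by move=> [l m] [/= pl pm]; rewrite lee_fin F0.
rewrite (_ : Igm `&` [set ([::], [::])] = [set ([::], [::])]); last first.
  by apply/seteqP; split => [x [] //|x ->]; split.
rewrite esum_set1; last by rewrite lee_fin F0.
congr (_ + _)%E.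
  congr (_%:E); rewrite /F /seq_factor !big_ord0 /= expr0 powRr0.
  set p1 := _ `^ 2^-1; set p2 := _ `^ (- 2^-1).
  by ring.
set NZ := [set LR : nat * nat | (0 < LR.1 + LR.2)%N].
set K := fun LR : nat * nat => pos_tuples LR.1 `*`` (fun=> pos_tuples LR.2).
set G := fun (LR : nat * nat) (l m : seq nat) =>
  (expR (- (2 * beta)) ^+ (LR.1 + LR.2) *
   seq_factor (q ^+ 2) c (-1) l * seq_factor (q ^+ 2) (- c) 0 m *
   (expR (- (2 * beta)) `^ (- 2^-1) +
    (expR (- (2 * beta)) `^ (2^-1) - expR (- (2 * beta)) `^ (- 2^-1)) *
    (q ^+ 2) `^ (sumn l)%:R * (q ^+ 2) `^ (sumn m)%:R))%:E.
have G0 : forall LR l m, pos_tuples LR.1 l -> pos_tuples LR.2 m -> (0 <= G LR l m)%E.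
  move=> LR l m [sl pl] [sm pm]; rewrite /G -sl -sm lee_fin.
  exact: F0.
transitivity (\esum_(p in NZ `*`` K) G p.1 p.2.1 p.2.2)%E; last first.
  rewrite -(@esum_esum _ _ _ NZ K (fun LR lm => G LR lm.1 lm.2)); last first.
    by move=> LR lm _ [/= pl pm]; apply: G0.
  apply: eq_esum => LR _.
  rewrite -(@esum_esum _ _ _ (pos_tuples LR.1) (fun=> pos_tuples LR.2) (G LR)) //.
  by move=> l m pl pm; apply: G0.
rewrite (reindex_esum (Igm `&` ~` [set ([::], [::])]) (NZ `*`` K)
          (fun lm => ((size lm.1, size lm.2), lm))); last first.
  split.
  - move=> [l m] [/= [pl pm] n0]; split; last by split; split.
    rewrite /NZ /=; clear pl pm.
    case: l n0 => [|a l] n0; last by rewrite /= addSn.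
    case: m n0 => [|b m] n0 //.
  - by move=> x x' _ _ [_ _ ->].
  - move=> [[L1 L2] [l m]] [/= nz [[/= sl pl] [/= sm pm]]].
    exists (l, m); last by rewrite /= sl sm.
    split; first by split.
    move=> /= E; case: E => El Em; subst l m.
    by move: nz; rewrite /= -sl -sm.
by apply: eq_esum => -[l m] _.
Qed.
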